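(* Let $s>1$, $\zeta(s)=\sum_{k=1}^\infty k^{-s}$, let $a_k=\frac{k^{-s}}{\zeta(s)}$ ($k\in\mathbb{N}$), and let $K$ be the associated generalized Cantor set. Then there are constants $c_1,c_2>0$ such that $$\frac{c_1}{(\ln(e/t))^{s-1}}\le |K(t)|\le \frac{c_2}{(\ln(e/t))^{s-1}}\quad\text{for all } t\in(0,1].$$
   Context: Generalized Cantor set for positive $(a_k)$ with $\sum a_k=1$: $K_0=[0,1]$; recursively $K_n$ is obtained from $K_{n-1}$ (a union of $2^{n-1}$ disjoint closed intervals) by removing from each of its intervals the open centered subinterval of length $a_n2^{-(n-1)}$; $K=\bigcap_n K_n$. For $t>0$, $K(t)=\{x\in\mathbb{R}:\operatorname{dist}(x,K)<t\}$ and $|\cdot|$ is Lebesgue measure. *)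

(* Defs.v *)
From mathcomp Require Import all_boot all_order all_algebra.
From mathcomp Require Import all_classical all_reals all_analysis.
Import Order.TTheory GRing.Theory Num.Theory.
Local Open Scope ring_scope.
Local Open Scope classical_set_scope.

(* The closed intervals [J.1, J.2] whose union is K_n, for the sequence
   (a k)_{k >= 1} (the value a 0 is never used). *)
Fixpoint cantor_intervals {R : realType} (a : nat -> R) (n : nat)
  : seq (R * R) :=
  match n with
  | 0 => [:: (0, 1)]
  | m.+1 =>
      flatten [seq (let c := (J.1 + J.2) / 2 in
                    let h := a m.+1 / 2 ^+ m / 2 in
                    [:: (J.1, c - h); (c + h, J.2)])
              | J <- cantor_intervals a m]
  end.

Definition cantor_stage {R : realType} (a : nat -> R) (n : nat) : set R :=
  [set x | exists2 J, J \in cantor_intervals a n & J.1 <= x <= J.2].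

Definition cantor_set {R : realType} (a : nat -> R) : set R :=
  \bigcap_n cantor_stage a n.

Definition nbhd_set {R : realType} (K : set R) (t : R) : set R :=
  [set x | exists2 y, K y & `|x - y| < t].

Definition zeta {R : realType} (s : R) : R :=
  limn (fun n : nat => \sum_(1 <= k < n) (k%:R `^ (- s))).

Definition zeta_seq {R : realType} (s : R) (k : nat) : R :=
  k%:R `^ (- s) / zeta s.

(* Main.v *)
Require Import Defs.
From mathcomp Require Import all_boot all_order all_algebra.
From mathcomp Require Import all_classical all_reals all_analysis.
From mathcomp Require Import ring lra.
Import Order.TTheory GRing.Theory Num.Theory.
Import numFieldNormedType.Exports.
Local Open Scope ring_scope.
Local Open Scope classical_set_scope.
Section Meas.
Context {R : realType}.
Local Notation mu := (@lebesgue_measure R).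

Lemma mu_le (A B : set R) : A `<=` B -> (mu A <= mu B)%E.
Proof.
move=> AB; rewrite /lebesgue_measure /lebesgue_stieltjes_measure /measure_extension.
by apply: le_mu_ext.
Qed.

Lemma mu_U2 (A B : set R) : (mu (A `|` B) <= mu A + mu B)%E.
Proof.
rewrite /lebesgue_measure /lebesgue_stieltjes_measure /measure_extension.
by apply: outer_measureU2.
Qed.

Lemma mu_cover {T : eqType} (l : seq T) (f : T -> set R) (c : R) :
  (forall J, J \in l -> (mu (f J) <= c%:E)%E) ->
  (mu [set y | exists2 J, J \in l & f J y] <= (c *+ size l)%:E)%E.
Proof.
elim: l => [|x l IH] H.
  rewrite (_ : [set y | _] = set0); first by rewrite measure0.
  by apply/seteqP; split => y //= [J].
apply: (le_trans (@mu_le _ (f x `|` [set y | exists2 J, J \in l & f J y]) _)).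
  move=> y /= [J]; rewrite inE => /orP[/eqP->|Jl] fy; [by left| by right; exists J].
apply: (le_trans (mu_U2 _ _)).
rewrite /= mulrS EFinD; apply: leeD.
  by apply: H; rewrite inE eqxx.
by apply: IH => J Jl; apply: H; rewrite inE Jl orbT.
Qed.

Lemma mu_itv_cc (x y : R) : x <= y -> mu `[x, y] = (y - x)%:E.
Proof.
move=> xy; rewrite lebesgue_measure_itv /=.

case: ifPn => H; first by [].
move: H; rewrite lte_fin -leNgt => yx.
have -> : x = y by apply/eqP; rewrite eq_le xy.
by rewrite subrr.
Qed.

Lemma mu_itv_oo (x y : R) : x <= y -> mu `]x, y[ = (y - x)%:E.
Proof.
move=> xy; rewrite lebesgue_measure_itv /=.
case: ifPn => H; first by [].
move: H; rewrite lte_fin -leNgt => yx.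
have -> : x = y by apply/eqP; rewrite eq_le xy.
by rewrite subrr.
Qed.

Lemma ereal_aux (x : \bar R) (c d : R) : (c%:E <= x + d%:E)%E -> ((c - d)%:E <= x)%E.
Proof.
case: x => [r| |] /=.
- by rewrite -EFinD !lee_fin => H; lra.
- by move=> _; rewrite leey.
- by rewrite addNye leeNy_eq.
Qed.

End Meas.
Section Cantor.
Context {R : realType}.
Variable a : nat -> R.
Local Notation mu := (@lebesgue_measure R).
Definition Tn n : R := 1 - \sum_(1 <= k < n.+1) a k.
Local Notation CI := (cantor_intervals a).

Lemma size_flat2 (F : R * R -> seq (R * R)) (l : seq (R * R)) :
  (forall J, size (F J) = 2%N) -> size (flatten (map F l)) = (2 * size l)%N.
Proof. by move=> H; elim: l => //= J l IH; rewrite size_cat IH H mulnS. Qed.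

Lemma CI_size n : size (CI n) = (2 ^ n)%N.
Proof. by elim: n => //= n IH; rewrite size_flat2 // IH expnS. Qed.

Lemma CI_succ n J' : J' \in CI n.+1 -> exists2 J, J \in CI n &
  (J' = (J.1, (J.1 + J.2) / 2 - a n.+1 / 2 ^+ n / 2) \/
   J' = ((J.1 + J.2) / 2 + a n.+1 / 2 ^+ n / 2, J.2)).
Proof.
rewrite /= => /flattenP [s /mapP [J JI ->]].
by rewrite !inE => /orP[/eqP->|/eqP->]; exists J => //; [left|right].
Qed.

Lemma CI_left n J : J \in CI n ->
  (J.1, (J.1 + J.2) / 2 - a n.+1 / 2 ^+ n / 2) \in CI n.+1.
Proof.
move=> JI; rewrite /=; apply/flattenP.
exists [:: (J.1, (J.1 + J.2) / 2 - a n.+1 / 2 ^+ n / 2);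
          ((J.1 + J.2) / 2 + a n.+1 / 2 ^+ n / 2, J.2)].
  by apply/mapP; exists J.
by rewrite inE eqxx.
Qed.

Lemma CI_right n J : J \in CI n ->
  ((J.1 + J.2) / 2 + a n.+1 / 2 ^+ n / 2, J.2) \in CI n.+1.
Proof.
move=> JI; rewrite /=; apply/flattenP.
exists [:: (J.1, (J.1 + J.2) / 2 - a n.+1 / 2 ^+ n / 2);
          ((J.1 + J.2) / 2 + a n.+1 / 2 ^+ n / 2, J.2)].
  by apply/mapP; exists J.
by rewrite !inE eqxx orbT.
Qed.

Lemma Tn_S n : Tn n.+1 = Tn n - a n.+1.
Proof. by rewrite /Tn big_nat_recr //= opprD addrA. Qed.

Lemma Tn_0 : Tn 0 = 1.
Proof. by rewrite /Tn big_geq // subr0. Qed.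

Lemma CI_len n J : J \in CI n -> J.2 - J.1 = Tn n / 2 ^+ n.
Proof.
elim: n J => [|n IH] J'.
  by rewrite /= inE => /eqP -> /=; rewrite Tn_0 expr0 divr1 subr0.
move=> /CI_succ [J JI [->|->]] /=; have := IH J JI; rewrite Tn_S exprS => H;
  have E : J.2 = J.1 + Tn n / 2 ^+ n by rewrite -H addrC subrK.
  rewrite E; field; by rewrite expf_neq0.
rewrite E; field; by rewrite expf_neq0.
Qed.

Hypothesis a_ge0 : forall k, 0 <= a k.
Hypothesis T_ge0 : forall n, 0 <= Tn n.

Lemma CI_le n J : J \in CI n -> J.1 <= J.2.
Proof. by move=> /CI_len H; rewrite -subr_ge0 H divr_ge0 // exprn_ge0. Qed.

Lemma h_ge0 n : 0 <= a n.+1 / 2 ^+ n / 2.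
Proof. by rewrite !divr_ge0 // exprn_ge0. Qed.

Lemma stage_S n x : cantor_stage a n.+1 x -> cantor_stage a n x.
Proof.
case=> J' /CI_succ [J JI [->|->]] /= /andP [h1 h2]; exists J => //;
  have := CI_le _ _ JI; have := h_ge0 n; move=> h0 J12; apply/andP; split; lra.
Qed.

Lemma stage_mono m n : (m <= n)%N -> cantor_stage a n `<=` cantor_stage a m.
Proof.
move=> mn; rewrite -(subnK mn); elim: (n - m)%N => // k IH x /stage_S.
by move/IH.
Qed.

Lemma CI_left_k n J k : J \in CI n -> exists2 J', J' \in CI (k + n) & J'.1 = J.1.
Proof.
move=> JI; elim: k => [|k [J' J'I E]]; first by exists J.
by exists (J'.1, (J'.1 + J'.2) / 2 - a (k + n).+1 / 2 ^+ (k + n) / 2);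
  [exact: CI_left|].
Qed.

Lemma CI_K n J : J \in CI n -> cantor_set a J.1.
Proof.
move=> JI m _; case: (leqP m n) => mn.
  by apply: (stage_mono _ _ mn); exists J => //; rewrite lexx (CI_le _ _ JI).
have [J' J'I E] := CI_left_k _ _ (m - n) JI.
rewrite subnK in J'I; last exact: ltnW.
by exists J' => //; rewrite -E lexx (CI_le _ _ J'I).
Qed.

Definition gapf n (J : R * R) : set R :=
  `](J.1 + J.2) / 2 - a n.+1 / 2 ^+ n / 2, (J.1 + J.2) / 2 + a n.+1 / 2 ^+ n / 2[.

Definition gapset n : set R := [set x | exists2 J, J \in CI n & gapf n J x].

Lemma stage_split n x : cantor_stage a n x -> cantor_stage a n.+1 x \/ gapset n x.
Proof.
case=> J JI /andP[h1 h2].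
case: (leP x ((J.1 + J.2) / 2 - a n.+1 / 2 ^+ n / 2)) => H1.
  by left; exists (J.1, (J.1 + J.2) / 2 - a n.+1 / 2 ^+ n / 2);
    [exact: CI_left | rewrite /= h1 H1].
case: (leP ((J.1 + J.2) / 2 + a n.+1 / 2 ^+ n / 2) x) => H2.
  by left; exists ((J.1 + J.2) / 2 + a n.+1 / 2 ^+ n / 2, J.2);
    [exact: CI_right | rewrite /= h2 H2].
by right; exists J => //; rewrite /gapf /= in_itv /= H1 H2.
Qed.

Lemma gapset_mu n : (mu (gapset n) <= (a n.+1)%:E)%E.
Proof.
apply: (le_trans (mu_cover _ _ (2 * (a n.+1 / 2 ^+ n / 2)) _)).
  move=> J _; rewrite /gapf mu_itv_oo; last by have := h_ge0 n; lra.
  by apply: lee_tofin; rewrite le_eqVlt; apply/orP; left; apply/eqP; ring.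
rewrite CI_size lee_fin -(mulr_natr _ (2 ^ n)) natrX le_eqVlt; apply/orP; left; apply/eqP.
field; by rewrite expf_neq0.
Qed.

Lemma stage_mu n : ((Tn n)%:E <= mu (cantor_stage a n))%E.
Proof.
elim: n => [|n IH].
  rewrite Tn_0; apply: (le_trans _ (@mu_le _ `[0, 1]%classic _ _)).
    by rewrite mu_itv_cc // subr0.
  by move=> x /=; rewrite in_itv /= => H; exists (0, 1) => //; rewrite inE.
rewrite Tn_S; apply: ereal_aux.
apply: (le_trans IH).
apply: (le_trans (@mu_le _ _ (cantor_stage a n.+1 `|` gapset n) _)).
  by move=> x /stage_split.
apply: (le_trans (mu_U2 _ _)); apply: leeD2l; exact: gapset_mu.
Qed.

Lemma nbhd_upper n t : 0 <= t ->
  (mu (nbhd_set (cantor_set a) t) <= (Tn n + 2 ^+ n.+1 * t)%:E)%E.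
Proof.
move=> t0.
apply: (le_trans (@mu_le _ _
  [set y | exists2 J, J \in CI n & `[J.1 - t, J.2 + t]%classic y] _)).
  move=> x [y Ky]; rewrite ltr_distl => /andP[l1 l2].
  have [J JI /andP[j1 j2]] := Ky n I.
  by exists J => //=; rewrite in_itv /=; apply/andP; split; lra.
apply: (le_trans (mu_cover _ _ (Tn n / 2 ^+ n + 2 * t) _)).
  move=> J JI; rewrite mu_itv_cc; last by have := CI_le _ _ JI; lra.
  rewrite lee_fin; have := CI_len _ _ JI; lra.
rewrite CI_size lee_fin -(mulr_natr _ (2 ^ n)) natrX le_eqVlt; apply/orP; left; apply/eqP.
rewrite exprS; field; by rewrite expf_neq0.
Qed.

Lemma nbhd_lower n t : Tn n / 2 ^+ n < t ->
  ((Tn n)%:E <= mu (nbhd_set (cantor_set a) t))%E.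
Proof.
move=> lt; apply: (le_trans (stage_mu n)); apply: mu_le.
move=> x [J JI /andP[j1 j2]]; exists J.1; first exact: CI_K _ _ JI.
have := CI_len _ _ JI; rewrite ger0_norm; [lra | lra].
Qed.

End Cantor.
Section Zeta.
Context {R : realType}.
Variable s : R.
Hypothesis hs : 1 < s.
Local Ltac slra := let h := fresh in pose proof hs as h; lra.

Definition Pz N : R := \sum_(1 <= k < N) (k%:R `^ (- s)).

Lemma powR_pos (x r : R) : 0 < x -> x `^ r = expR (r * ln x).
Proof. by move=> x0; rewrite /powR gt_eqF. Qed.

Lemma ln_le1 (x : R) : 0 < x -> ln x <= x - 1.
Proof. by move=> x0; have := expR_ge1Dx (ln x); rewrite lnK ?posrE //; lra. Qed.

Lemma key_ineq (y : R) : 1 < y ->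
  (s - 1) * y `^ (- s) <= (y - 1) `^ (- (s - 1)) - y `^ (- (s - 1)).
Proof.
move=> y1; have y0 : 0 < y by slra.
have s1 : 0 <= s - 1 by slra.
have x0 : 0 < y - 1 by slra.
rewrite !powR_pos //.
set A := expR (- (s - 1) * ln y).
have A0 : 0 < A by apply: expR_gt0.
have e1 : expR (- s * ln y) = A * y^-1.
  rewrite /A -[X in _ * X^-1](@lnK R y) ?posrE // -expRN -expRD.
  by congr expR; ring.
have e2 : expR (- (s - 1) * ln (y - 1)) =
    A * expR ((s - 1) * (ln y - ln (y - 1))).
  by rewrite /A -expRD; congr expR; ring.
have e3 := expR_ge1Dx ((s - 1) * (ln y - ln (y - 1))).
have d1 : y^-1 <= ln y - ln (y - 1).
  have := ln_le1 ((y - 1) / y) (divr_gt0 x0 y0).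
  rewrite ln_div ?posrE // => H.
  have -> : y^-1 = - ((y - 1) / y - 1) by field; slra.
  slra.
have d2 : (s - 1) * y^-1 <= (s - 1) * (ln y - ln (y - 1)).
  exact: ler_wpM2l s1 _ _ d1.
rewrite e1 e2.
have : A * ((s - 1) * y^-1) <= A * (expR ((s - 1) * (ln y - ln (y - 1))) - 1).
  apply: ler_wpM2l (ltW A0) _ _ _; slra.
have -> : (s - 1) * (A * y^-1) = A * ((s - 1) * y^-1) by ring.
have -> : A * expR ((s - 1) * (ln y - ln (y - 1))) - A =
  A * (expR ((s - 1) * (ln y - ln (y - 1))) - 1) by ring.
by [].
Qed.

Lemma tail_upper n m : (1 <= n)%N ->
  (s - 1) * \sum_(n.+1 <= k < n.+1 + m) k%:R `^ (- s) <=
  n%:R `^ (- (s - 1)) - (n + m)%:R `^ (- (s - 1)).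
Proof.
move=> n1; elim: m => [|m IH].
  by rewrite big_geq ?addn0 // mulr0 subrr.
rewrite addnS big_nat_recr /=; last by rewrite leq_addr.
rewrite mulrDr.
have K := key_ineq ((n + m).+1%:R).
rewrite -natr1 addrK in K.
have : 1 < (n + m)%:R + 1 :> R.
  have : 1 <= (n + m)%:R :> R by rewrite ler1n addn_gt0 n1.
  slra.
move=> /K {}K.
rewrite addSn addnS -natr1; slra.
Qed.

Lemma Pz_ge0 N : 0 <= Pz N.
Proof. by apply: sumr_ge0 => k _; apply: powR_ge0. Qed.

Lemma Pz_le N M : (N <= M)%N -> Pz N <= Pz M.
Proof.
move=> NM; case: N NM => [|N] NM.
  by rewrite {1}/Pz big_geq // Pz_ge0.
rewrite /Pz (@big_cat_nat _ _ _ N.+1 1 M) //=.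
by rewrite lerDl; apply: sumr_ge0 => k _; apply: powR_ge0.
Qed.

Lemma Pz_split n N : (n.+1 <= N)%N ->
  Pz N = Pz n.+1 + \sum_(n.+1 <= k < N) k%:R `^ (- s).
Proof. by move=> nN; rewrite /Pz (@big_cat_nat _ _ _ n.+1 1 N). Qed.

Lemma Pz_upper n N : (1 <= n)%N ->
  (s - 1) * (Pz N - Pz n.+1) <= n%:R `^ (- (s - 1)).
Proof.
move=> n1; case: (leqP N n.+1) => Nn.
  have := Pz_le _ _ Nn; have := powR_ge0 n%:R (- (s - 1)).
  have : 0 < s - 1 by slra.
  move=> s0 p0 PP.
  apply: (le_trans _ p0); rewrite pmulr_rle0 //; slra.
have := tail_upper n (N - n.+1)%N n1.
rewrite subnKC; last exact: ltnW.
rewrite (Pz_split n N); last exact: ltnW.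
rewrite [Pz n.+1 + _]addrC addrK.
have := powR_ge0 (n + (N - n.+1))%:R (- (s - 1)); slra.
Qed.

Lemma Pz2 : Pz 2 = 1.
Proof. by rewrite /Pz big_nat1 powR1. Qed.

Lemma Pz_bound N : Pz N <= 1 + (s - 1)^-1.
Proof.
have := Pz_upper 1 N (leqnn 1); rewrite Pz2 powR1 => H.
have s0 : 0 < s - 1 by slra.
have : Pz N - 1 <= (s - 1)^-1.
  by rewrite -(ler_pM2l s0) mulfV ?gt_eqF.
slra.
Qed.

Lemma Pz_nd : nondecreasing_seq Pz.
Proof. by move=> N M; apply: Pz_le. Qed.

Lemma Pz_cvg : cvgn Pz.
Proof.
apply: nondecreasing_is_cvgn; first exact: Pz_nd.
by exists (1 + (s - 1)^-1) => _ [N _ <-]; apply: Pz_bound.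
Qed.

Lemma Pz_le_zeta N : Pz N <= zeta s.
Proof. exact: (nondecreasing_cvgn_le Pz_nd Pz_cvg). Qed.

Lemma zeta_ge1 : 1 <= zeta s.
Proof. by rewrite -Pz2; apply: Pz_le_zeta. Qed.

Lemma zeta_upper n : (1 <= n)%N ->
  (s - 1) * (zeta s - Pz n.+1) <= n%:R `^ (- (s - 1)).
Proof.
move=> n1; have s0 : 0 < s - 1 by slra.
have : zeta s <= Pz n.+1 + n%:R `^ (- (s - 1)) / (s - 1).
  apply: limr_le; first exact: Pz_cvg.
  apply: nearW => N /=; rewrite -/(Pz N).
  have := Pz_upper n N n1 => H.
  have : Pz N - Pz n.+1 <= n%:R `^ (- (s - 1)) / (s - 1).
    by rewrite ler_pdivlMr // mulrC.
  slra.
move=> H.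
have : zeta s - Pz n.+1 <= n%:R `^ (- (s - 1)) / (s - 1) by slra.
by rewrite ler_pdivlMr // mulrC.
Qed.

Lemma zeta_lower n : (1 <= n)%N ->
  (n.*2)%:R `^ (- s) *+ n <= zeta s - Pz n.+1.
Proof.
move=> n1.
apply: (le_trans _ (_ : Pz (n.+1 + n) - Pz n.+1 <= _)); last first.
  by have := Pz_le_zeta (n.+1 + n); slra.
rewrite (Pz_split n (n.+1 + n)) ?leq_addr // addrC addKr.
rewrite -[X in _ *+ X](addKn n.+1 n) -sumr_const_nat.
apply: ler_sum_nat => k /andP[k1 k2].
have k0 : 0 < k%:R :> R by rewrite ltr0n; apply: leq_trans k1.
rewrite !powRN lef_pV2 ?posrE ?powR_gt0 //; last by rewrite ltr0n double_gt0.
apply: ge0_ler_powR; rewrite ?nnegrE ?ler0n //; first slra.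
by rewrite ler_nat -addnn; rewrite addSn ltnS in k2.
Qed.

End Zeta.
Lemma ln2_gt0 {R : realType} : 0 < ln (2 : R).
Proof. by apply: ln_gt0; lra. Qed.

Lemma ln2_le1 {R : realType} : ln (2 : R) <= 1.
Proof. by have := ln_le1 (2 : R) ltac:(lra); lra. Qed.

Lemma low_real {R : realType} (s z M L : R) : 1 < s -> 0 < z -> 1 <= M ->
  M * ln 2 <= L ->
  (ln 2) `^ (s - 1) / (2 `^ s * z) / L `^ (s - 1) <= (2 * M) `^ (- s) * M / z.
Proof.
move=> hs z0 M1 ML.
have l0 := @ln2_gt0 R.
have M0 : 0 < M by lra.
have ML0 : 0 < M * ln 2 by apply: mulr_gt0.
have L0 : 0 < L by lra.
have a0 : 0 <= s - 1 by lra.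
have HL : (M * ln 2) `^ (s - 1) <= L `^ (s - 1).
  by apply: ge0_ler_powR => //; rewrite nnegrE; lra.
rewrite powRM in HL; [|lra|lra].
rewrite powRN powRM; [|lra|lra].
rewrite -(@mulr_powRB1 _ M s); [|lra|lra].
set X := M `^ (s - 1) in HL *; set Y := ln 2 `^ (s - 1) in HL *.
set W := L `^ (s - 1) in HL *; set B := 2 `^ s.
have X0 : 0 < X by apply: powR_gt0.
have Y0 : 0 < Y by apply: powR_gt0.
have W0 : 0 < W by apply: powR_gt0.
have B0 : 0 < B by apply: powR_gt0; lra.
have -> : (B * (M * X))^-1 * M / z = Y / (B * z) * (X * Y)^-1.
  by field; rewrite !gt_eqF.
apply: ler_wpM2l.
  by apply: divr_ge0; [lra | apply: mulr_ge0; lra].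
by rewrite lef_pV2 ?posrE //; apply: mulr_gt0.
Qed.

Lemma pow2_lower {R : realType} (s : R) (n : nat) : 1 < s ->
  (n%:R * ln 2 / (s - 1)) `^ (s - 1) <= 2 ^+ n.
Proof.
move=> hs; have a0 : 0 < s - 1 by lra.
have l0 := @ln2_gt0 R.
have -> : (2 : R) ^+ n = expR (n%:R * ln 2).
  by rewrite expRM_natl lnK // posrE; lra.
set y := n%:R * ln 2.
have y0 : 0 <= y by apply: mulr_ge0; [apply: ler0n | lra].
have -> : expR y = expR (y / (s - 1)) `^ (s - 1).
  by rewrite -expRM; congr expR; field; apply/eqP => H; lra.
apply: ge0_ler_powR; first lra.
  by rewrite nnegrE; apply: divr_ge0; lra.
  by rewrite nnegrE; apply: expR_ge0.
have := expR_ge1Dx (y / (s - 1)); lra.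
Qed.

Lemma up_real {R : realType} (s z N L T x : R) : 1 < s -> 0 < z -> 1 <= N ->
  0 < L -> L <= 5 * N ->
  T <= N `^ (- (s - 1)) / ((s - 1) * z) ->
  x <= 2 / (N * ln 2 / (s - 1)) `^ (s - 1) ->
  T + x <= (((s - 1) * z)^-1 + 2 / (ln 2 / (s - 1)) `^ (s - 1)) * 5 `^ (s - 1)
            / L `^ (s - 1).
Proof.
move=> hs z0 N1 L0 LN HT Hx.
have a0 : 0 < s - 1 by lra.
have l0 := @ln2_gt0 R.
have N0 : 0 < N by lra.
rewrite powRN in HT.
rewrite -mulrA powRM in Hx; [|lra|]; last by apply: divr_ge0; lra.
have HL : L `^ (s - 1) <= (5 * N) `^ (s - 1).
  by apply: ge0_ler_powR; rewrite ?nnegrE; lra.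
rewrite powRM in HL; [|lra|lra].
set X := N `^ (s - 1) in HT Hx HL *; set l := (ln 2 / (s - 1)) `^ (s - 1) in Hx *.
set W := L `^ (s - 1) in HL *; set F := 5 `^ (s - 1) in HL *.
have X0 : 0 < X by apply: powR_gt0.
have l0' : 0 < l by apply: powR_gt0; apply: divr_gt0.
have W0 : 0 < W by apply: powR_gt0.
have F0 : 0 < F by apply: powR_gt0; lra.
set K0 := ((s - 1) * z)^-1 + 2 / l.
have K00 : 0 < K0.
  by apply: addr_gt0; [rewrite invr_gt0; apply: mulr_gt0 | apply: divr_gt0; lra].
have E : K0 / X = X^-1 / ((s - 1) * z) + 2 / (X * l).
  by rewrite /K0; field; rewrite !gt_eqF.
apply: (le_trans (_ : _ <= K0 / X)); first by rewrite E; lra.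
have -> : K0 / X = K0 * F * (F * X)^-1.
  by field; rewrite !gt_eqF.
apply: ler_wpM2l; first by apply: mulr_ge0; lra.
by rewrite lef_pV2 ?posrE //; apply: mulr_gt0.
Qed.
Lemma zs_ge0 {R : realType} (s : R) : 1 < s -> forall k, 0 <= zeta_seq s k.
Proof.
move=> hs k; rewrite /zeta_seq; apply: divr_ge0; first exact: powR_ge0.
by have := zeta_ge1 _ hs; lra.
Qed.

Lemma Tz {R : realType} (s : R) n : 1 < s ->
  Tn (zeta_seq s) n = (zeta s - Pz s n.+1) / zeta s.
Proof.
move=> hs; have z1 := zeta_ge1 _ hs; have z0 : 0 < zeta s by lra.
rewrite /Tn /zeta_seq -mulr_suml /Pz.
by field; rewrite gt_eqF.
Qed.

Lemma Tz_ge0 {R : realType} (s : R) : 1 < s -> forall n, 0 <= Tn (zeta_seq s) n.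
Proof.
move=> hs [|n]; first by rewrite Tn_0.
have z1 := zeta_ge1 _ hs; have z0 : 0 < zeta s by lra.
rewrite Tz //; apply: divr_ge0; last lra.
apply: (le_trans _ (zeta_lower _ hs n.+1 (ltn0Sn n))).
by apply: mulrn_wge0; apply: powR_ge0.
Qed.

Lemma Tz_le1 {R : realType} (s : R) n : 1 < s -> Tn (zeta_seq s) n <= 1.
Proof.
move=> hs; have z1 := zeta_ge1 _ hs; have z0 : 0 < zeta s by lra.
rewrite Tz // ler_pdivrMr // mul1r.
by have := Pz_ge0 s n.+1; lra.
Qed.

Lemma find_m {R : realType} (t : R) : 0 < t -> t <= 1 ->
  exists m, [/\ (1 <= m)%N, 1 < 2 ^+ m * t & 2 ^+ m.-1 * t <= 1].
Proof.
move=> t0 t1.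
have ex : exists m, 1 < 2 ^+ m * t.
  exists (Num.bound (t^-1)).
  have ti : 0 <= t^-1 by rewrite invr_ge0 ltW.
  have h1 := archi_boundP ti.
  have h2 : (Num.bound t^-1)%:R <= (2 : R) ^+ Num.bound t^-1.
    by rewrite -natrX ler_nat ltnW // ltn_expl.
  apply: (le_lt_trans (_ : 1 <= t^-1 * t)); first by rewrite mulVf ?gt_eqF.
  apply: (lt_le_trans (_ : _ < (Num.bound t^-1)%:R * t)).
    by rewrite ltr_pM2r.
  by rewrite ler_pM2r.
case: (@ex_minnP (fun m => 1 < 2 ^+ m * t) ex) => m Hm Hmin.
case: m Hm Hmin => [|m] Hm Hmin.
  by move: Hm; rewrite expr0 mul1r; lra.
exists m.+1; split => //.
rewrite leNgt; apply/negP => H.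
by have := Hmin _ H; rewrite /= ltnn.
Qed.
Theorem lemma4p4 (R : realType) (s : R) (hs : 1 < s) :
  exists c1 c2 : R, 0 < c1 /\ 0 < c2 /\
    forall t : R, 0 < t <= 1 ->
      ((c1 / (ln (expR 1 / t)) `^ (s - 1))%:E
         <= (@lebesgue_measure R) (nbhd_set (cantor_set (zeta_seq s)) t))%E /\
      ((@lebesgue_measure R) (nbhd_set (cantor_set (zeta_seq s)) t)
         <= (c2 / (ln (expR 1 / t)) `^ (s - 1))%:E)%E.
Proof.
have z1 := zeta_ge1 _ hs.
have z0 : 0 < zeta s by lra.
have A0 := zs_ge0 _ hs.
have T0 := Tz_ge0 _ hs.
have l0 := @ln2_gt0 R.
have l1 := @ln2_le1 R.
have a0 : 0 < s - 1 by lra.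
have two2 : (0 : R) < 2 by lra.
have K0 : 0 < ((s - 1) * zeta s)^-1 + 2 / (ln 2 / (s - 1)) `^ (s - 1).
  apply: addr_gt0; first by rewrite invr_gt0 mulr_gt0.
  by apply: divr_gt0 => //; apply: powR_gt0; apply: divr_gt0.
exists ((ln 2) `^ (s - 1) / (2 `^ s * zeta s)),
  (3 * 3 `^ (s - 1) + (((s - 1) * zeta s)^-1 + 2 / (ln 2 / (s - 1)) `^ (s - 1))
     * 5 `^ (s - 1)).
split.
  apply: divr_gt0; first exact: powR_gt0.
  by apply: mulr_gt0 => //; apply: powR_gt0.
split.
  apply: addr_gt0; first by apply: mulr_gt0; [lra | apply: powR_gt0; lra].
  by apply: mulr_gt0 => //; apply: powR_gt0; lra.
move=> t /andP[t0 t1].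
have [[|m] [m1 Hm1 Hm2]] := find_m _ t0 t1; first by [].
rewrite /= in Hm2.
have LE : ln (expR 1 / t) = 1 - ln t.
  by rewrite ln_div ?posrE ?expR_gt0 // expRK.
rewrite LE.
have lnt1 : - ln t < m.+1%:R * ln 2.
  have : 0 < ln (2 ^+ m.+1 * t) by apply: ln_gt0.
  by rewrite lnM ?posrE ?(exprn_gt0 _ two2) // (lnXn _ two2) -mulr_natl; lra.
have lnt2 : ln t <= - (m%:R * ln 2).
  have : ln (2 ^+ m * t) <= 0 by apply: ln_le0.
  by rewrite lnM ?posrE ?(exprn_gt0 _ two2) // (lnXn _ two2) -mulr_natl; lra.
have lnt0 : ln t <= 0 by apply: ln_le0.
have Em : m.+1%:R = m%:R + 1 :> R by rewrite natr1.
have m0 : 0 <= m%:R :> R by apply: ler0n.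
split.
  have HT : Tn (zeta_seq s) m.+1 / 2 ^+ m.+1 < t.
    have := Tz_le1 s m.+1 hs => T1.
    have P : 0 < (2 : R) ^+ m.+1 by apply: exprn_gt0.
    rewrite ltr_pdivrMr // mulrC; lra.
  apply: (le_trans _ (nbhd_lower _ A0 T0 m.+1 t HT)).
  rewrite lee_fin Tz //.
  apply: (le_trans (low_real s (zeta s) (m.+1)%:R (1 - ln t) hs z0 _ _)).
  - by rewrite ler1n.
  - rewrite Em mulrDl mul1r; lra.
  have ZL := zeta_lower _ hs m.+1 (ltn0Sn m).
  have E2 : ((m.+1).*2)%:R = 2 * (m.+1)%:R :> R by rewrite -muln2 natrM mulrC.
  rewrite E2 -mulr_natr in ZL.
  apply: ler_wpM2r; first by rewrite invr_ge0; lra.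
  exact: ZL.
have [n hn hm] : exists2 n, (n.*2 <= m)%N & (m <= n.*2 + 1)%N.
  exists m./2; first by rewrite halfK leq_subr.
  by rewrite -{1}(odd_double_half m) addnC leq_add2l; case: (odd m).
have H4 : 2 ^+ n.*2 * t <= 1.
  apply: le_trans Hm2; apply: ler_wpM2r; first lra.
  by apply: ler_weXn2l => //; lra.
have Hx : 2 ^+ n.+1 * t <= 2 / 2 ^+ n.
  rewrite ler_pdivlMr; last exact: exprn_gt0.
  have -> : 2 ^+ n.+1 * t * 2 ^+ n = 2 * (2 ^+ n.*2 * t).
    by rewrite exprS -addnn exprD; ring.
  lra.
have Lm : 1 - ln t < m%:R + 2.
  have : m.+1%:R * ln 2 <= m.+1%:R :> R.
    by rewrite -[X in _ <= X]mulr1; apply: ler_wpM2l; [apply: ler0n | exact: l1].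
  lra.
have mn : m%:R <= 2 * n%:R + 1 :> R.
  by move: hm; rewrite -(ler_nat R) natrD -muln2 natrM mulrC.
have L1 : 1 <= 1 - ln t by lra.
have Lp : 0 < (1 - ln t) `^ (s - 1) by apply: powR_gt0; lra.
apply: (le_trans (nbhd_upper _ T0 n t (ltW t0))).
rewrite lee_fin mulrDl.
have P5 : 0 <= (((s - 1) * zeta s)^-1 + 2 / (ln 2 / (s - 1)) `^ (s - 1))
     * 5 `^ (s - 1) / (1 - ln t) `^ (s - 1).
  apply: divr_ge0; last lra.
  by apply: mulr_ge0; [lra | apply: powR_ge0].
have P3 : 0 <= 3 * 3 `^ (s - 1) / (1 - ln t) `^ (s - 1).
  by apply: divr_ge0; [apply: mulr_ge0; [lra | apply: powR_ge0] | lra].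
case: (posnP n) => [n0|npos].
  have La : (1 - ln t) `^ (s - 1) <= 3 `^ (s - 1).
    apply: ge0_ler_powR; rewrite ?nnegrE; try lra.
    by move: mn; rewrite n0 mulr0 add0r; lra.
  have : 3 <= 3 * 3 `^ (s - 1) / (1 - ln t) `^ (s - 1).
    by rewrite ler_pdivlMr //; apply: ler_wpM2l; lra.
  move: Hx; rewrite n0 Tn_0 expr0 divr1 => Hx.
  have := Tz_le1 s 0 hs; lra.
have n1 : 1 <= n%:R :> R by rewrite ler1n.
have L0 : 0 < 1 - ln t by lra.
have L5 : 1 - ln t <= 5 * n%:R by lra.
have := up_real s (zeta s) n%:R (1 - ln t)
  (Tn (zeta_seq s) n) (2 ^+ n.+1 * t) hs z0 n1 L0 L5.
move=> H; apply: (le_trans (H _ _)); first 2 last.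
- lra.
- have ZU := zeta_upper _ hs n npos.
  rewrite Tz // invfM mulrA; apply: ler_wpM2r; first by rewrite invr_ge0; lra.
  by rewrite ler_pdivlMr // mulrC.
- apply: (le_trans Hx); apply: ler_wpM2l; first lra.
  have p1 : 0 < (n%:R * ln 2 / (s - 1)) `^ (s - 1).
    apply: powR_gt0; apply: divr_gt0 => //; apply: mulr_gt0 => //.
    by rewrite ltr0n.
  have p2 : 0 < (2 : R) ^+ n by apply: exprn_gt0.
  rewrite lef_pV2 ?posrE //; exact: pow2_lower.
Qed.
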